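(* Let $\{X_1,\ldots,X_{p_n}\}$ be random variables with index set $V=\{1,\ldots,p_n\}$, observed through $n$ i.i.d. samples, and for each pair $i\neq j$ let $e_{ij}=0$ if $X_i$ and $X_j$ are conditionally independent given $\boldsymbol X_{V\setminus\{i,j\}}$ and $e_{ij}=1$ otherwise. For each $i$ let $S_i$ be the set of true variables of the regression $X_i\sim \boldsymbol X_{V\setminus\{i\}}$, and for each pair $j<i$ let $S_{j\setminus i}$ be the set of true variables of the regression $X_j\sim \boldsymbol X_{V\setminus\{i,j\}}$; let $\hat S_i$ and $\hat S_{j\setminus i}$ be the index sets selected from data by a variable selection/screening procedure applied to these two regressions. For each pair $j<i$, let $T_{ij}$ be the statistic of a nonparametric test of $X_i \perp X_j \mid \boldsymbol X_{\hat S_i\cup \hat S_{j\setminus i}\setminus\{j\}}$, let $\mu_{ij}=E(T_{ij})$, and let $\mu_{ij,0}$ and $\mu_{ij,1}$ denote the mean of $T_{ij}$ under the null hypothesis $e_{ij}=0$ and the alternative $e_{ij}=1$, respectively. Assume: (1) the generative distribution of the data is Markov and faithful to a directed acyclic graph; (2) $p_n$ increases as a polynomial of $n$; (3) (uniform sure screening) $\min_{1\le i\le p_n} P(S_i\subset \hat S_i)\to 1$ and $\min_{1\le j<i\le p_n} P(S_{j\setminus i}\subset \hat S_{j\setminus i})\to 1$ as $n\to\infty$; (4) (separation) $\min_{i,j}(\mu_{ij,1}-\mu_{ij,0})>\eta_n$, where $\eta_n=c_0 n^{-\kappa}$ for some constants $c_0>0$, $\kappa>0$; (5) (tail probability) $\sup_{i,j}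 P(|T_{ij}-\mu_{ij}|>\tfrac12\eta_n)=\exp\{-O(n^{\delta(\kappa)})\}$ for some positive number $\delta(\kappa)$ depending on $\kappa$. Let $\hat{\mathcal E}_n$ be the estimated network obtained by declaring, for each pair $(X_i,X_j)$, an edge ($e_{ij}=1$) if and only if $T_{ij}>\mu_{ij,0}+\eta_n/2$, i.e., using $\mu_{ij,0}+\eta_n/2$ as the critical value of the conditional independence test. Then $P\{\text{an error occurs in } \hat{\mathcal E}_n\}\to 0$ as $n\to\infty$, where an error means that for some pair $(i,j)$ the declared value differs from $e_{ij}$.
   Context: This is the consistency guarantee for the ''double regression'' procedure for learning an undirected Markov network (graphical model) of possibly non-Gaussian, nonlinearly dependent variables: for each variable $X_i$ one performs a (nonlinear) regression $X_i\sim\boldsymbol X_{V\setminus\{i\}}$ and selects $\hat S_i$; for each pair $j<i$ one performs a regression $X_j\sim \boldsymbol X_{V\setminus\{i,j\}}$ and selects $\hat S_{j\setminus i}$; then a nonparametric conditional independence test of $X_i$ and $X_j$ given $\boldsymbol X_{\hat S_i\cup\hat S_{j\setminus i}\setminus\{j\}}$ is performed with statistic $T_{ij}$. Here $\boldsymbol X_A=\{X_k:k\in A\}$ for $A\subset V$, and the ''set of true variables'' of a regression is the set of explanatory variables on which the conditional distribution of the response actually depends. The notation $\exp\{-O(n^{\delta})\}$ means a quantity bounded by $\exp(-c_1 n^{\delta})$ for some constant $c_1>0$ and all sufficiently large $n$. The suprema and minima over $i,j$ range over all pairs $1\le j<i\le p_n$. *)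

(* Defs.v *)
From HB Require Import structures.
From mathcomp Require Import all_boot all_order all_algebra.
From mathcomp Require Import all_classical all_reals all_analysis.
From Stdlib Require Import Relations.Relation_Operators.

Set Implicit Arguments.
Unset Strict Implicit.
Unset Printing Implicit Defensive.

Import Order.TTheory GRing.Theory Num.Theory.
Local Open Scope classical_set_scope.
Local Open Scope ring_scope.
Local Open Scope ereal_scope.

Section DoubleRegressionDefs.
Context {d : measure_display} {T : measurableType d} {R : realType}.

Definition gen_sigma (X : nat -> T -> R) (A : set nat) : set (set T) :=
  <<s [set E | exists k, A k /\ exists B : set R, measurable B /\ E = X k @^-1` B] >>.

(* Conditional independence of sigma-algebras F and G given H under P:
   for A in F and B in G there are H-measurable versions phi, psi of
   P(A | H) and P(B | H) whose product is a version of P(A /\ B | H). *)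
Definition cond_indep (P : probability T R) (F G H : set (set T)) : Prop :=
  forall A B, F A -> G B -> exists phi psi : T -> R,
    (forall x, (0 <= phi x <= 1)%R) /\ (forall x, (0 <= psi x <= 1)%R) /\
    (forall U : set R, measurable U -> H (phi @^-1` U)) /\
    (forall U : set R, measurable U -> H (psi @^-1` U)) /\
    (forall C, H C ->
       P (A `&` C) = \int[P]_(x in C) (phi x)%:E /\
       P (B `&` C) = \int[P]_(x in C) (psi x)%:E /\
       P (A `&` B `&` C) = \int[P]_(x in C) (phi x * psi x)%:E).

Definition CIset (P : probability T R) (X : nat -> T -> R) (A B C : set nat) : Prop :=
  cond_indep P (gen_sigma X A) (gen_sigma X B) (gen_sigma X C).

Definition edge_absent (P : probability T R) (X : nat -> T -> R) (p i j : nat) : Prop :=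
  CIset P X [set i] [set j] (`I_p `\` ([set i] `|` [set j])).

(* S_i : true variables of the regression X_i ~ X_{V \ {i}} : the explanatory
   variables X_k on which the conditional law of X_i actually depends, i.e.
   X_i is not conditionally independent of X_k given the other regressors. *)
Definition true_vars (P : probability T R) (X : nat -> T -> R) (p i : nat) : set nat :=
  [set k | (k < p)%N /\ k <> i /\
     ~ CIset P X [set i] [set k] (`I_p `\` ([set i] `|` [set k]))].

Definition true_vars2 (P : probability T R) (X : nat -> T -> R) (p i j : nat) : set nat :=
  [set k | (k < p)%N /\ k <> i /\ k <> j /\
     ~ CIset P X [set j] [set k] (`I_p `\` ([set i] `|` [set j] `|` [set k]))].

End DoubleRegressionDefs.

Definition dag_acyclic (G : rel nat) : Prop :=
  forall u, ~ clos_trans nat (fun x y => G x y) u u.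

Definition descendant (G : rel nat) (u w : nat) : Prop :=
  clos_refl_trans nat (fun x y => G x y) u w.

Definition adjacent (G : rel nat) : rel nat := fun x y => G x y || G y x.

Definition trail (G : rel nat) (a b : nat) (s : seq nat) : Prop :=
  exists s', s = a :: s' /\ last a s' = b /\ path (adjacent G) a s' /\ uniq s.

Definition blocked (G : rel nat) (C : set nat) (s : seq nat) : Prop :=
  exists k, (0 < k)%N /\ (k.+1 < size s)%N /\
    let u := nth 0%N s k.-1 in let m := nth 0%N s k in let w := nth 0%N s k.+1 in
    if G u m && G w m then (forall z, descendant G m z -> ~ C z)
    else C m.

Definition dsep (G : rel nat) (A B C : set nat) : Prop :=
  forall a b s, A a -> B b -> trail G a b s -> blocked G C s.

Definition markov_faithful_dag {d} {T : measurableType d} {R : realType}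
  (P : probability T R) (X : nat -> T -> R) (p : nat) (G : rel nat) : Prop :=
  (forall u v, G u v -> (u < p)%N /\ (v < p)%N) /\ dag_acyclic G /\
  forall A B C : set nat, A `<=` `I_p -> B `<=` `I_p -> C `<=` `I_p ->
    A `&` B = set0 -> A `&` C = set0 -> B `&` C = set0 ->
    (CIset P X A B C <-> dsep G A B C).

(* Main.v *)
Require Import Defs.
From HB Require Import structures.
From mathcomp Require Import all_boot all_order all_algebra.
From mathcomp Require Import all_classical all_reals all_analysis.

From mathcomp Require Import ring lra.
Import Order.TTheory GRing.Theory Num.Theory.
Local Open Scope classical_set_scope.
Local Open Scope ring_scope.



Lemma unionS_eq (T : Type) (F : nat -> set T) m :
  [set w | exists k, (k < m.+1)%N /\ F k w] =
  [set w | exists k, (k < m)%N /\ F k w] `|` F m.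
Proof.
apply/seteqP; split => w /=.
- move=> [k [km Fk]]; rewrite ltnS leq_eqVlt in km.
  case/orP: km => [/eqP <-|km]; [by right | by left; exists k].
- case=> [[k [km Fk]]|Fm]; [exists k; split => //; exact: ltnW | by exists m].
Qed.

Lemma union0_eq (T : Type) (F : nat -> set T) :
  [set w | exists k, (k < 0)%N /\ F k w] = set0.
Proof. by apply/seteqP; split => w //= [k []]. Qed.

Lemma union_meas d (T : measurableType d) (F : nat -> set T) m :
  (forall k, (k < m)%N -> measurable (F k)) ->
  measurable [set w | exists k, (k < m)%N /\ F k w].
Proof.
elim: m => [|m IH] H; first by rewrite union0_eq.
rewrite unionS_eq; apply: measurableU.
  by apply: IH => k km; apply: H; exact: ltnW.
exact: H.
Qed.

Lemma union_bound d (T : measurableType d) (R : realType)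
  (mu : {measure set T -> \bar R}) (F : nat -> set T) m (b : R) :
  0 <= b ->
  (forall k, (k < m)%N -> measurable (F k) /\ (mu (F k) <= b%:E)%E) ->
  (mu [set w | exists k, (k < m)%N /\ F k w] <= (m%:R * b)%:E)%E.
Proof.
move=> b0; elim: m => [|m IH] H; first by rewrite union0_eq measure0 mul0r.
have H' : forall k, (k < m)%N -> measurable (F k) /\ (mu (F k) <= b%:E)%E.
  by move=> k km; apply: H; exact: ltnW.
rewrite unionS_eq.
have [mFm muFm] := H m (ltnSn m).
apply: (le_trans (measureU2 _ _ _)) => //.
  by apply: union_meas => k km; have [] := H' k km.
rewrite -natr1 mulrDl mul1r EFinD.
by apply: leeD => //; apply: IH.
Qed.


Lemma quad_bound (R : realType) (a q L : R) : 0 < q ->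
  2 * a * L - q * L ^+ 2 / 2 <= (2 * a + 1) ^+ 2 / (2 * q) - L.
Proof.
move=> q0.
rewrite -subr_ge0.
have -> : (2 * a + 1) ^+ 2 / (2 * q) - L - (2 * a * L - q * L ^+ 2 / 2)
   = (q * L - (2 * a + 1)) ^+ 2 / (2 * q).
  by field; rewrite ?gt_eqF // ?mulf_neq0 // ?gt_eqF.
by apply: divr_ge0; [exact: sqr_ge0 | lra].
Qed.

Lemma decay (R : realType) (C a c1 delta : R) : 0 < C -> 0 < c1 -> 0 < delta ->
  exists K : R, 0 < K /\ forall n, (0 < n)%N ->
   (C * n%:R `^ a) ^+ 2 * expR (- (c1 * n%:R `^ delta)) <= K / n%:R.
Proof.
move=> C0 c10 d0.
pose q := c1 * delta ^+ 2.
have q0 : 0 < q by rewrite /q mulr_gt0 // exprn_gt0.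
pose M := (2 * a + 1) ^+ 2 / (2 * q).
exists (C ^+ 2 * expR M); split; first by rewrite mulr_gt0 ?exprn_gt0 ?expR_gt0.
move=> n n0.
have nR0 : (0 : R) < n%:R by rewrite ltr0n.
pose L := @ln R n%:R.
have L0 : 0 <= L by apply: ln_ge0; rewrite ler1n.
have pw : forall s, n%:R `^ s = expR (s * L).
  by move=> s; rewrite /powR gt_eqF.
rewrite !pw.
have -> : (C * expR (a * L)) ^+ 2 * expR (- (c1 * expR (delta * L)))
   = C ^+ 2 * expR (2 * a * L - c1 * expR (delta * L)).
  rewrite exprMn expr2 -!mulrA -!expRD.
  congr (_ * (_ * expR _)); ring.
rewrite -[C ^+ 2 * expR M / _]mulrA; apply: ler_wpM2l; first by rewrite exprn_ge0 // ltW.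
have -> : expR M / n%:R = expR (M - L).
  by rewrite expRD expRN lnK // posrE.
rewrite ler_expR.
have h1 : 1 + (delta * L) ^+ 2 / 2 <= expR (delta * L).
  have := @expR_ge1Dxn R (delta * L) 1 (mulr_ge0 (ltW d0) L0).
  by have -> : (2`! = 2)%N by [].
have := @quad_bound R a q L q0.
rewrite -/M => h2.
have h3 : c1 * ((delta * L) ^+ 2 / 2) <= c1 * expR (delta * L).
  by rewrite ler_pM2l //; lra.
have e : q * L ^+ 2 / 2 = c1 * ((delta * L) ^+ 2 / 2).
  by rewrite /q exprMn; field.
rewrite e in h2.
nra.
Qed.


Lemma meas_gt d (T : measurableType d) (R : realType) (f : T -> R) (c : R) :
  measurable_fun setT f -> measurable [set w | c < f w].
Proof.
move=> mf.
have := mf measurableT `]c, +oo[%classic (measurable_itv _).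
rewrite setTI.
have -> : f @^-1` `]c, +oo[%classic = [set w | c < f w].
  by apply/seteqP; split => w /=; rewrite in_itv /= andbT.
done.
Qed.

Lemma meas_iff d (T : measurableType d) (R : realType) (f : T -> R) (c : R) (A : Prop) :
  measurable_fun setT f -> measurable [set w | (c < f w) <-> A].
Proof.
move=> mf; case: (pselect A) => hA.
  have -> : [set w | (c < f w) <-> A] = [set w | c < f w].
    by apply/seteqP; split => w /=; tauto.
  exact: meas_gt.
have -> : [set w | (c < f w) <-> A] = ~` [set w | c < f w].
  by apply/seteqP; split => w /=; tauto.
by apply: measurableC; exact: meas_gt.
Qed.

Lemma meas_tail d (T : measurableType d) (R : realType) (f : T -> R) (c m : R) :
  measurable_fun setT f -> measurable [set w | c < `|f w - m|].
Proof.
move=> mf; apply: (@meas_gt _ _ _ (fun w => `|f w - m|)).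
apply: (measurableT_comp (@measurable_realfun.normr_measurable R setT)).
exact: measurable_realfun.measurable_funB mf (measurable_cst _).
Qed.

Lemma harm_bound (R : realType) (K : R) n : 0 < K -> (0 < n)%N ->
  K / n%:R <= harmonic n * (2 * K).
Proof.
move=> K0 n0; rewrite /harmonic /=.
have x1 : (1 : R) <= n%:R by rewrite ler1n.
rewrite -natr1.
rewrite ler_pdivrMr; last lra.
rewrite -mulrA mulrC ler_pdivlMr; last lra.
nra.
Qed.

(* n : sample size; p n : number of variables; X n k : population variable X_k;
   data n w t k : k-th variable of the t-th sample (t < n);
   tstat n i j : the test statistic T_ij as a function of the data;
   sel1 n i, sel2 n i j : selection procedures giving \hat S_i, \hat S_{j\i};
   mu n i j = E(T_ij); mu0 / mu1 : means of T_ij under null / alternative. *)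
Theorem theorem1 (d : measure_display) (Omega : measurableType d) (R : realType)
  (P : probability Omega R)
  (p : nat -> nat)
  (X : nat -> nat -> Omega -> R)
  (data : nat -> Omega -> nat -> nat -> R)
  (tstat : nat -> nat -> nat -> (nat -> nat -> R) -> R)
  (sel1 : nat -> nat -> (nat -> nat -> R) -> set nat)
  (sel2 : nat -> nat -> nat -> (nat -> nat -> R) -> set nat)
  (mu mu0 mu1 : nat -> nat -> nat -> R)
  (c0 kappa : R) :
  (* measurability of the variables and of the data *)
  (forall n k, (k < p n)%N -> measurable_fun setT (X n k)) ->
  (forall n t k, (t < n)%N -> (k < p n)%N -> measurable_fun setT (fun w => data n w t k)) ->
  (* the n samples are identically distributed as (X_0,...,X_{p-1}) ... *)
  (forall n t (B : nat -> set R), (t < n)%N -> (forall k, measurable (B k)) ->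
     P [set w | forall k, (k < p n)%N -> B k (data n w t k)] =
     P [set w | forall k, (k < p n)%N -> B k (X n k w)]) ->
  (* ... and mutually independent *)
  (forall n (B : nat -> nat -> set R), (forall t k, measurable (B t k)) ->
     P [set w | forall t k, (t < n)%N -> (k < p n)%N -> B t k (data n w t k)] =
     (\prod_(t < n) P [set w | forall k, (k < p n)%N -> B t k (data n w t k)])%E) ->
  (* selected sets are subsets of the regressors, and are events *)
  (forall n i D, (i < p n)%N -> sel1 n i D `<=` `I_(p n) `\` [set i]) ->
  (forall n i j D, (j < i)%N -> (i < p n)%N ->
     sel2 n i j D `<=` `I_(p n) `\` ([set i] `|` [set j])) ->
  (forall n i k, (i < p n)%N -> measurable [set w | sel1 n i (data n w) k]) ->
  (forall n i j k, (j < i)%N -> (i < p n)%N -> measurable [set w | sel2 n i j (data n w) k]) ->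
  (* T_ij is a random variable with mean mu_ij *)
  (forall n i j, (j < i)%N -> (i < p n)%N ->
     measurable_fun setT (fun w => tstat n i j (data n w)) /\
     P.-integrable setT (fun w => (tstat n i j (data n w))%:E) /\
     (\int[P]_w (tstat n i j (data n w))%:E = (mu n i j)%:E)%E) ->
  (* mu0 / mu1 are the means of T_ij under the null e_ij = 0 / alternative e_ij = 1 *)
  (forall n i j, (j < i)%N -> (i < p n)%N ->
     (edge_absent P (X n) (p n) i j -> mu n i j = mu0 n i j) /\
     (~ edge_absent P (X n) (p n) i j -> mu n i j = mu1 n i j)) ->
  (* (1) Markov and faithful to a DAG *)
  (forall n, exists G : rel nat, markov_faithful_dag P (X n) (p n) G) ->
  (* (2) p_n grows polynomially in n *)
  (exists (C a : R), 0 < C /\ 0 < a /\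
     \forall n \near \oo, (p n)%:R <= C * (n%:R `^ a)) ->
  (* (3) uniform sure screening *)
  (forall eps : R, 0 < eps -> \forall n \near \oo, forall i, (i < p n)%N ->
     ((1 - eps)%:E <= P [set w | true_vars P (X n) (p n) i `<=` sel1 n i (data n w)])%E) ->
  (forall eps : R, 0 < eps -> \forall n \near \oo, forall i j, (j < i)%N -> (i < p n)%N ->
     ((1 - eps)%:E <= P [set w | true_vars2 P (X n) (p n) i j `<=` sel2 n i j (data n w)])%E) ->
  (* (4) separation, with eta_n = c0 n^(-kappa) *)
  0 < c0 -> 0 < kappa ->
  (forall n i j, (j < i)%N -> (i < p n)%N ->
     c0 * (n%:R `^ (- kappa)) < mu1 n i j - mu0 n i j) ->
  (* (5) tail probability *)
  (exists delta c1 : R, 0 < delta /\ 0 < c1 /\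
     \forall n \near \oo, forall i j, (j < i)%N -> (i < p n)%N ->
       (P [set w | (c0 * (n%:R `^ (- kappa)) / 2 < `|tstat n i j (data n w) - mu n i j|)%R]
          <= (expR (- (c1 * n%:R `^ delta)))%:E)%E) ->
  (* conclusion: P(some declared edge indicator differs from e_ij) -> 0 *)
  (fun n => P [set w | exists i j, (j < i)%N /\ (i < p n)%N /\
      ((mu0 n i j + c0 * (n%:R `^ (- kappa)) / 2 < tstat n i j (data n w))
         <-> edge_absent P (X n) (p n) i j)]) @ \oo --> 0%E.
Proof.
move=> Xm Dm Hid Hind Hs1 Hs2 Hs1m Hs2m HT HM Hdag [C [a [C0 [a0 Hp]]]] Hsc1 Hsc2
  c00 k0 Hsep [delta [c1 [d0 [c10 Ht]]]].
have [K [K0 HK]] := @decay R C a c1 delta C0 c10 d0.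
have Hsq := @squeeze_cvge nat \oo (filter_on_Filter eventually_filterType) R (fun=> 0%E) _
          (fun n => (harmonic n * (2 * K))%:E).
refine (Hsq _ _ 0%E _ _); last 2 first.
- exact: cvg_cst.
- apply: cvg_EFin; first by near=> n.
  have := @cvgMr_tmp _ _ _ _ _ _ (2 * K) (@cvg_harmonic R).
  rewrite mul0r; exact.
near=> n.
have n0 : (0 < n)%N by near: n; exists 1%N.
have hp : (p n)%:R <= C * n%:R `^ a by near: n; exact: Hp.
have ht : forall i j, (j < i)%N -> (i < p n)%N ->
       (P [set w | (c0 * (n%:R `^ (- kappa)) / 2 < `|tstat n i j (data n w) - mu n i j|)%R]
          <= (expR (- (c1 * n%:R `^ delta)))%:E)%E by near: n; exact: Ht.
apply/andP; split; first exact: measure_ge0.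
pose eta := c0 * (n%:R `^ (- kappa)).
pose b := expR (- (c1 * n%:R `^ delta)).
have b0 : 0 <= b by exact: expR_ge0.
pose Tl i j := [set w | eta / 2 < `|tstat n i j (data n w) - mu n i j|].
pose Q i j := [set w | (mu0 n i j + eta / 2 < tstat n i j (data n w))
         <-> edge_absent P (X n) (p n) i j].
pose U := [set w | exists i, (i < p n)%N /\ [set w | exists j, (j < i)%N /\ Tl i j w] w].
have EE : [set w | exists i j, (j < i)%N /\ (i < p n)%N /\
      ((mu0 n i j + c0 * (n%:R `^ (- kappa)) / 2 < tstat n i j (data n w))
         <-> edge_absent P (X n) (p n) i j)] =
   [set w | exists i, (i < p n)%N /\ [set w | exists j, (j < i)%N /\ Q i j w] w].
  apply/seteqP; split => w /=.
  - by move=> [i [j [ji [ip H]]]]; exists i; split => //; exists j.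
  - by move=> [i [ip [j [ji H]]]]; exists i, j.
rewrite EE.
have mE : measurable
   [set w | exists i, (i < p n)%N /\ [set w | exists j, (j < i)%N /\ Q i j w] w].
  apply: union_meas => i ip; apply: union_meas => j ji.
  by apply: meas_iff; have [] := HT n i j ji ip.
have mU : measurable U.
  apply: union_meas => i ip; apply: union_meas => j ji.
  by apply: meas_tail; have [] := HT n i j ji ip.
have sub : [set w | exists i, (i < p n)%N /\ [set w | exists j, (j < i)%N /\ Q i j w] w]
   `<=` U.
  move=> w [i [ip [j [ji H]]]]; exists i; split => //; exists j; split => //.
  rewrite /Tl /=.
  have [Hm0 Hm1] := HM n i j ji ip.
  move: H; rewrite /Q /=.
  case: (pselect (edge_absent P (X n) (p n) i j)) => hA H.
  - have hlt := proj2 H hA.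
    rewrite (Hm0 hA).
    apply: (lt_le_trans _ (ler_norm _)); lra.
  - have hle : tstat n i j (data n w) <= mu0 n i j + eta / 2.
      by rewrite leNgt; apply/negP => /(proj1 H).
    have hs := Hsep n i j ji ip.
    rewrite (Hm1 hA) distrC.
    apply: (lt_le_trans _ (ler_norm _)); rewrite -/eta in hs; lra.
apply: (le_trans (le_measure _ _ _ sub)); rewrite ?inE //.
rewrite /U.
apply: (le_trans (@union_bound _ _ _ P _ _ _ (mulr_ge0 (ler0n _ (p n)) b0) _)).
  move=> i ip; split.
    by apply: union_meas => j ji; apply: meas_tail; have [] := HT n i j ji ip.
  apply: (le_trans (@union_bound _ _ _ P _ _ _ b0 _)).
    by move=> j ji; split; [apply: meas_tail; have [] := HT n i j ji ip |
       exact: ht i j ji ip].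
  by rewrite lee_fin; apply: ler_wpM2r => //; rewrite ler_nat ltnW.
rewrite lee_fin.
apply: (le_trans _ (@harm_bound R K n K0 n0)).
apply: le_trans (HK n n0).
rewrite mulrA -expr2; apply: ler_wpM2r => //.
by rewrite expr2 ler_pM.
Unshelve. all: end_near.
Qed.
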